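(* Let $S$ be a shape graph, let $t\in\Gamma$, and let $T=\{t'\in\Gamma\mid t=t'\}$ be the set of types equivalent to $t$ w.r.t. $S$. Then for every shape graph $S'$ with $S'\equiv S$ and every context $(u,a)\in\Gamma\times\Sigma$: $$\sum_{s\in T}\mathsf{minarity}_S(u,a,s)=\sum_{s\in T}\mathsf{minarity}_{S'}(u,a,s).$$
   Context: Fix finite sets $\Sigma$ (edge labels) and $\Gamma$ (types). Graphs and shape graphs. A graph is $G=(N_G,E_G)$ with $E_G\subseteq N_G\times\Sigma\times N_G$. A shape graph is a function $\mathsf{arity}_S:\Gamma\times\Sigma\times\Gamma\to\{[0;0],[0;1],[1;1],[0;\infty],[1;\infty]\}$. $\mathsf{minarity}_S(u,a,s)$ denotes the lower bound of the interval $\mathsf{arity}_S(u,a,s)$. Satisfaction. A node $n$ satisfies type $t$ w.r.t. $S$ iff there is $\lambda$ from the outgoing edges of $n$ to $\Gamma$ such that (1) each edge's target satisfies $\lambda(e)$, and (2) for all $a\in\Sigma$ and $s\in\Gamma$, the number of outgoing $a$-edges $e$ with $\lambda(e)=s$ lies in $\mathsf{arity}_S(t,a,s)$. (This recursion is read as the largest such relation, as usual for shape expression schemas.) Typings and languages. $\mathit{typing}_G(n)$ is the set of types that $n$ satisfies. $L(S)$ is the set of finite graphs, equipped with their typing, in which every node has at least one type. $S\equiv S'$ iff $L(S)=L(S')$. Type equivalence. $t=t'$ w.r.t. $S$ means: for every $G\in L(S)$ and $n\in N_G$, $t\in\mathit{typing}_G(n)$ iff $t'\in\mathit{typing}_G(n)$.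 A context is a pair $(u,a)\in\Gamma\times\Sigma$. *)

(* Defs.v *)
From mathcomp Require Import all_boot.
Set Implicit Arguments. Unset Strict Implicit. Unset Printing Implicit Defensive.

(* The five admissible arity intervals [0;0],[0;1],[1;1],[0;oo],[1;oo]. *)
Inductive arity := A00 | A01 | A11 | A0inf | A1inf.

Definition in_arity (k : nat) (i : arity) : bool :=
  match i with
  | A00 => k == 0
  | A01 => k <= 1
  | A11 => k == 1
  | A0inf => true
  | A1inf => 0 < k
  end.

Definition min_of (i : arity) : nat :=
  match i with A11 | A1inf => 1 | _ => 0 end.

Definition shape_graph (Gamma Sigma : finType) := Gamma -> Sigma -> Gamma -> arity.

Definition minarity (Gamma Sigma : finType) (S : shape_graph Gamma Sigma)
  (u : Gamma) (a : Sigma) (s : Gamma) : nat := min_of (S u a s).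

Definition graph (N Sigma : finType) := {set (N * Sigma) * N}.

(* One unfolding of the satisfaction condition for node n and type t,
   relative to a candidate relation R (node satisfies type). lam assigns a
   type to each edge; only outgoing edges of n matter. *)
Definition locally_ok (Gamma Sigma N : finType) (S : shape_graph Gamma Sigma)
  (E : graph N Sigma) (R : N -> Gamma -> Prop) (n : N) (t : Gamma) : Prop :=
  exists lam : (N * Sigma) * N -> Gamma,
    (forall e, e \in E -> e.1.1 = n -> R e.2 (lam e)) /\
    (forall (a : Sigma) (s : Gamma),
        in_arity #|[set e in E | (e.1.1 == n) && (e.1.2 == a) && (lam e == s)]|
                 (S t a s)).

(* Satisfaction: the largest relation closed under locally_ok
   (greatest fixpoint, as a union of post-fixpoints). *)
Definition sat (Gamma Sigma N : finType) (S : shape_graph Gamma Sigma)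
  (E : graph N Sigma) (n : N) (t : Gamma) : Prop :=
  exists R : N -> Gamma -> Prop,
    (forall m t', R m t' -> locally_ok S E R m t') /\ R n t.

Definition in_lang (Gamma Sigma N : finType) (S : shape_graph Gamma Sigma)
  (E : graph N Sigma) : Prop :=
  forall n : N, exists t : Gamma, sat S E n t.

(* L(S) = L(S'): for every graph G and every typing tau,
   (G, tau) in L(S) iff (G, tau) in L(S'), where (G,tau) in L(S) means
   tau is the typing of G w.r.t. S and every node has a type. *)
Definition shape_equiv (Gamma Sigma : finType) (S S' : shape_graph Gamma Sigma) : Prop :=
  forall (N : finType) (E : graph N Sigma) (tau : N -> Gamma -> Prop),
    ((forall n t, tau n t <-> sat S E n t) /\ in_lang S E) <->
    ((forall n t, tau n t <-> sat S' E n t) /\ in_lang S' E).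

Definition type_equiv (Gamma Sigma : finType) (S : shape_graph Gamma Sigma)
  (t t' : Gamma) : Prop :=
  forall (N : finType) (E : graph N Sigma), in_lang S E ->
    forall n : N, sat S E n t <-> sat S E n t'.

(* Main.v *)
Require Import Defs.
From mathcomp Require Import all_boot.
From Stdlib Require Import Classical ClassicalEpsilon.
Set Implicit Arguments. Unset Strict Implicit. Unset Printing Implicit Defensive.

Section Gen.
Variables (Gamma Sigma : finType).

Lemma in_arity_min k i : in_arity k i -> min_of i <= k.
Proof. by case: i => /=; case: k. Qed.

Lemma in_arity_of_min i : in_arity (min_of i) i.
Proof. by case: i. Qed.

Lemma locally_ok_mono (N : finType) (S : shape_graph Gamma Sigma) (E : graph N Sigma)
  (R1 R2 : N -> Gamma -> Prop) n t :
  (forall m t', R1 m t' -> R2 m t') -> locally_ok S E R1 n t -> locally_ok S E R2 n t.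
Proof. move=> H [lam [H1 H2]]; exists lam; split=> // e He He1; apply: H; exact: H1. Qed.

Lemma sat_unfold (N : finType) (S : shape_graph Gamma Sigma) (E : graph N Sigma) n t :
  sat S E n t -> locally_ok S E (sat S E) n t.
Proof. move=> [R [HR Hn]]. apply: locally_ok_mono (HR _ _ Hn) => m t' Hm. by exists R. Qed.

Definition emap (N1 N2 : finType) (f : N1 -> N2) (e : (N1 * Sigma) * N1) : (N2*Sigma)*N2 :=
  ((f e.1.1, e.1.2), f e.2).

Lemma emap_inj (N1 N2 : finType) (f : N1 -> N2) : injective f -> injective (emap f).
Proof. move=> fi [[x b] y] [[x' b'] y'] [/fi -> -> /fi ->]. done. Qed.

Section Embed.
Variables (N1 N2 : finType) (S : shape_graph Gamma Sigma) (E1 : graph N1 Sigma)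
  (E2 : graph N2 Sigma) (f : N1 -> N2).
Hypothesis finj : injective f.
Hypothesis Hfw : forall e, e \in E1 -> emap f e \in E2.
Hypothesis Hbw : forall m e, e \in E2 -> e.1.1 = f m -> exists2 e', e' \in E1 & e = emap f e'.

Lemma count_eq m (lam1 : _ -> Gamma) (lam2 : _ -> Gamma) b s :
  (forall e, e \in E1 -> e.1.1 = m -> lam2 (emap f e) = lam1 e) ->
  #|[set e in E2 | (e.1.1 == f m) && (e.1.2 == b) && (lam2 e == s)]| =
  #|[set e in E1 | (e.1.1 == m) && (e.1.2 == b) && (lam1 e == s)]|.
Proof.
move=> Hl.
rewrite -(card_imset _ (emap_inj finj)).
apply: eq_card => e; rewrite inE.
apply/idP/imsetP.
- case/andP => He /andP[/andP[/eqP H1 /eqP H2] /eqP H3].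
  have [e' He' Ee] := Hbw He H1.
  have E1m : e'.1.1 = m by move: H1; rewrite Ee => /= /finj.
  exists e' => //. rewrite inE He' /= E1m eqxx -(Hl _ He' E1m) -Ee H3 eqxx andbT /=.
  by rewrite -H2 Ee.
- case=> e'; rewrite inE => /andP[He' /andP[/andP[/eqP H1 /eqP H2] /eqP H3]] ->.
  by rewrite Hfw //= H1 H2 Hl // H3 !eqxx.
Qed.

Lemma sat_fw m t : sat S E1 m t -> sat S E2 (f m) t.
Proof.
move=> Hs.
exists (fun y t' => exists m', y = f m' /\ sat S E1 m' t'); split; last by exists m.
move=> y t' [m' [-> Hm']].
have [lam1 [T1 C1]] := sat_unfold Hm'.
pose g y := odflt m' [pick x | f x == y].
have gK : forall x, g (f x) = x.
  move=> x; rewrite /g; case: pickP => [x0 /eqP /finj -> //|/(_ x)]; by rewrite eqxx.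
exists (fun e => lam1 ((g e.1.1, e.1.2), g e.2)); split.
- move=> e He He1; have [e' He' Ee] := Hbw He He1.
  have E1m : e'.1.1 = m' by move: He1; rewrite Ee => /= /finj.
  exists e'.2; split; first by rewrite Ee.
  rewrite Ee /= !gK. have -> : ((e'.1.1, e'.1.2), e'.2) = e' by case: (e') => [[? ?] ?]. exact: T1.
- move=> b s. rewrite (count_eq (lam1 := lam1)); first exact: C1.
  move=> e _ _ /=; rewrite !gK; by case: e => [[? ?] ?].
Qed.

Lemma sat_bw m t : sat S E2 (f m) t -> sat S E1 m t.
Proof.
move=> Hs.
exists (fun x t' => sat S E2 (f x) t'); split => // x t' Hx.
have [lam2 [T2 C2]] := sat_unfold Hx.
exists (fun e => lam2 (emap f e)); split.
- move=> e He He1. apply: (T2 (emap f e)) => //; first exact: Hfw. by rewrite /= He1.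
- move=> b s. rewrite -(count_eq (lam2 := lam2)) //.
Qed.
End Embed.

Lemma min_of01 i : (min_of i == 0) || (min_of i == 1).
Proof. by case: i. Qed.

Lemma sum_card_part (T : finType) (P : pred T) (lam : T -> Gamma) (D : {set Gamma}) :
  \sum_(s in D) #|[set e | P e && (lam e == s)]| = #|[set e | P e && (lam e \in D)]|.
Proof.
rewrite -sum1_card (partition_big lam (mem D)); last by move=> e; rewrite inE => /andP[].
apply: eq_bigr => s Hs; rewrite -sum1_card; apply: eq_bigl => e; rewrite !inE.
by case: eqP => [->|]; rewrite ?Hs ?andbT ?andbF.
Qed.

Lemma sum01 (D : {set Gamma}) (m : Gamma -> nat) : (forall s, (m s == 0) || (m s == 1)) ->
  \sum_(s in D) m s = #|[set s in D | m s == 1]|.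
Proof.
move=> H; rewrite -sum1_card big_mkcond [RHS]big_mkcond; apply: eq_bigr => s _ /=.
rewrite !inE; case: (s \in D) => //=. by case/orP: (H s) => /eqP ->.
Qed.

Definition cont (S : shape_graph Gamma Sigma) s t := forall (N : finType) (E : graph N Sigma),
  in_lang S E -> forall n, sat S E n s -> sat S E n t.

Definition asb (P : Prop) : bool := if excluded_middle_informative P then true else false.
Lemma asbP P : reflect P (asb P).
Proof. rewrite /asb; case: excluded_middle_informative => H; by constructor. Qed.

Definition Dset (S : shape_graph Gamma Sigma) (t : Gamma) : {set Gamma} := [set s | asb (cont S s t)].

Definition cgraph (S : shape_graph Gamma Sigma) : graph Gamma Sigma :=
  [set e | minarity S e.1.1 e.1.2 e.2 == 1].

Lemma cgraph_sat (S0 : shape_graph Gamma Sigma) (s : Gamma) : sat S0 (cgraph S0) s s.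
Proof.
exists (fun m t' => m = t'); split => // m _ <-.
exists (fun e => e.2); split => // b s'.
set X := [set _ in _ | _].
suff -> : #|X| = minarity S0 m b s' by apply: in_arity_of_min.
case/orP: (min_of01 (S0 m b s')) => /eqP Hm.
- rewrite /minarity Hm; apply/eqP; rewrite cards_eq0; apply/eqP/setP => e.
  rewrite !inE; apply/negP => /andP[H1 /andP[/andP[/eqP E1 /eqP E2] /eqP E3]].
  by move: H1; rewrite /minarity E1 E2 E3 Hm.
- rewrite /minarity Hm; rewrite -(cards1 ((m, b), s')); apply: eq_card => e.
  rewrite !inE; apply/idP/eqP.
  + by case: e => [[x y] z] /= /andP[_ /andP[/andP[/eqP -> /eqP ->] /eqP ->]].
  + by move=> ->; rewrite /= /minarity Hm !eqxx.
Qed.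

Lemma cgraph_lang (S0 : shape_graph Gamma Sigma) : in_lang S0 (cgraph S0).
Proof. move=> n; exists n; exact: cgraph_sat. Qed.

Lemma witness (S : shape_graph Gamma Sigma) (t s : Gamma) : exists w : {N : finType & (graph N Sigma * N)%type},
  in_lang S (projT2 w).1 /\ sat S (projT2 w).1 (projT2 w).2 s /\
  (s \notin Dset S t -> ~ sat S (projT2 w).1 (projT2 w).2 t).
Proof.
case: (boolP (s \in Dset S t)) => Hs.
  exists (existT _ Gamma (cgraph S, s)) => /=; split; first exact: cgraph_lang.
  by split; [exact: cgraph_sat|].
apply: NNPP => Hno; move: Hs; rewrite inE => /asbP; apply => N E HL n Hn.
apply: NNPP => Ht; apply: Hno; exists (existT _ N (E, n)) => /=. by do 2 split => //.
Qed.
End Gen.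

Section Core.
Variables (Gamma Sigma : finType) (S S' : shape_graph Gamma Sigma).
Hypothesis HS : shape_equiv S S'.

Lemma equiv_fw (N : finType) (E : graph N Sigma) : in_lang S E ->
  in_lang S' E /\ forall n t, sat S E n t <-> sat S' E n t.
Proof.
move=> HL; have [H1 H2] := proj1 (HS E (sat S E)) (conj (fun n t => iff_refl _) HL).
by split.
Qed.

Lemma equiv_bw (N : finType) (E : graph N Sigma) : in_lang S' E ->
  in_lang S E /\ forall n t, sat S' E n t <-> sat S E n t.
Proof.
move=> HL; have [H1 H2] := proj2 (HS E (sat S' E)) (conj (fun n t => iff_refl _) HL).
by split.
Qed.

Variables (t u : Gamma) (a : Sigma).

Definition wit s := proj1_sig (constructive_indefinite_description _ (witness S t s)).
Definition NN s : finType := projT1 (wit s).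
Definition ES s : graph (NN s) Sigma := (projT2 (wit s)).1.
Definition xs s : NN s := (projT2 (wit s)).2.
Lemma wit_spec s : in_lang S (ES s) /\ sat S (ES s) (xs s) s /\
  (s \notin Dset S t -> ~ sat S (ES s) (xs s) t).
Proof. exact: (proj2_sig (constructive_indefinite_description _ (witness S t s))). Qed.

Definition NT : finType := option {s : Gamma & NN s}.
Definition inj s (y : NN s) : NT := Some (Tagged NN y).
Definition newe (e : (NT * Sigma) * NT) : bool :=
  [exists s, (minarity S' u e.1.2 s == 1) && (e == ((None, e.1.2), inj (xs s)))].
Definition compe (e : (NT * Sigma) * NT) : bool :=
  [exists s, [exists e' in ES s, emap (@inj s) e' == e]].
Definition EG : graph NT Sigma := [set e | compe e || newe e].

Lemma inj_inj s : injective (@inj s).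
Proof. move=> y1 y2 H; case: H => H; exact: eq_from_Tagged H. Qed.

Lemma EG_fw s e : e \in ES s -> emap (@inj s) e \in EG.
Proof.
move=> He; rewrite inE; apply/orP; left; apply/existsP; exists s.
apply/existsP; exists e; by rewrite He eqxx.
Qed.

Lemma EG_bw s m e : e \in EG -> e.1.1 = @inj s m -> exists2 e', e' \in ES s & e = emap (@inj s) e'.
Proof.
rewrite inE => /orP[|].
- move=> /existsP[s' /existsP[e' /andP[He' /eqP <-]]] /= Hs.
  have Hss : s' = s by case: Hs.
  subst s'. by exists e'.
- move=> /existsP[s' /andP[_ /eqP ->]] //.
Qed.

Lemma sat_comp (S0 : shape_graph Gamma Sigma) s y r :
  sat S0 (ES s) y r <-> sat S0 EG (@inj s y) r.
Proof.
split; [apply: sat_fw|apply: sat_bw]; (try exact: inj_inj); (try exact: EG_fw);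
  move=> m e; exact: EG_bw.
Qed.

Definition lamN (e : (NT * Sigma) * NT) : Gamma :=
  if e.2 is Some z then tag z else u.

Lemma EG_None e : (e \in EG) && (e.1.1 == None) = newe e.
Proof.
rewrite inE; case Hn: (newe e).
- by move: Hn => /existsP[s /andP[_ /eqP ->]] /=; rewrite orbT.
- rewrite orbF; apply/negP => /andP[/existsP[s /existsP[e' /andP[_ /eqP <-]]]] //.
Qed.

Lemma card_new b s :
  #|[set e in EG | (e.1.1 == None) && (e.1.2 == b) && (lamN e == s)]| = minarity S' u b s.
Proof.
have HX : forall e, (e \in [set e in EG | (e.1.1 == None) && (e.1.2 == b) && (lamN e == s)])
   = newe e && (e.1.2 == b) && (lamN e == s).
  by move=> e; rewrite inE -EG_None !andbA.
case/orP: (min_of01 (S' u b s)) => /eqP Hm; rewrite /minarity Hm.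
- apply/eqP; rewrite cards_eq0; apply/eqP/setP => e; rewrite HX inE.
  apply/negP => /andP[/andP[/existsP[s0 /andP[Hm0 /eqP Ee]] /eqP Eb] /eqP Es].
  move: Es; rewrite Ee /lamN /= => Es; subst s0.
  by move: Hm0; rewrite Eb /minarity Hm.
- have -> : (1 = #|[set (((None : NT), b), inj (xs s))]|)%N by rewrite cards1.
  apply: eq_card => e.
  rewrite HX inE; apply/idP/eqP.
  + move=> /andP[/andP[/existsP[s0 /andP[Hm0 /eqP Ee]] /eqP Eb] /eqP Es].
    move: Es; rewrite Ee /lamN /= => Es; subst s0. by rewrite Ee Eb.
  + move=> ->; rewrite /= /lamN /= !eqxx !andbT; apply/existsP; exists s.
    by rewrite /minarity Hm !eqxx.
Qed.

Lemma None_sat' : sat S' EG None u.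
Proof.
exists (fun z t' => (z = None /\ t' = u) \/ sat S' EG z t'); split; last by left.
move=> z t' [[-> ->]|Hz]; last first.
  apply: locally_ok_mono (sat_unfold Hz) => m r H; by right.
exists lamN; split.
- move=> e He He1; right.
  have : newe e by rewrite -EG_None He He1 eqxx.
  move=> /existsP[s /andP[_ /eqP Ee]]; rewrite Ee /lamN /=.
  apply/sat_comp; have [HL [Hs _]] := wit_spec s.
  by apply/(proj2 (equiv_fw HL)).
- move=> b s; rewrite card_new; exact: in_arity_of_min.
Qed.

Lemma EG_lang' : in_lang S' EG.
Proof.
case=> [[s y]|]; last by exists u; exact: None_sat'.
have [HL _] := wit_spec s.
have [r Hr] := HL y; exists r.
have H1 := proj1 (sat_comp S' y r). apply: H1. apply: (proj1 (proj2 (equiv_fw HL) _ _)). exact: Hr.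
Qed.

Lemma core : \sum_(s in Dset S t) minarity S u a s <= \sum_(s in Dset S t) minarity S' u a s.
Proof.
have [HLS Heq] := equiv_bw EG_lang'.
have HN : sat S EG None u by apply/Heq; exact: None_sat'.
have [lam [T1 C1]] := sat_unfold HN.
apply: (@leq_trans (\sum_(s in Dset S t)
   #|[set e | ((e \in EG) && (e.1.1 == None) && (e.1.2 == a)) && (lam e == s)]|)).
  apply: leq_sum => s _; apply: in_arity_min.
  move: (C1 a s); congr (in_arity _ _); apply: eq_card => e; by rewrite !inE -!andbA.
rewrite sum_card_part.
rewrite (sum01 _ (fun s => min_of01 (S' u a s))).
apply: (@leq_trans #|[set ((None, a), inj (xs s)) | s in [set s in Dset S t | minarity S' u a s == 1]]|);
  last exact: leq_imset_card.
apply: subset_leq_card; apply/subsetP => e; rewrite inE.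
move=> /andP[/andP[/andP[He He1] He2] Hl].
have Hsat := T1 e He (eqP He1).
have : newe e by rewrite -EG_None He He1.
move=> /existsP[s0 /andP[Hm0 /eqP Ee]].
apply/imsetP; exists s0; last by rewrite Ee (eqP He2).
rewrite inE -(eqP He2) Hm0 andbT.
apply/negPn/negP => Hn; have [_ [_ Hw]] := wit_spec s0; apply: (Hw Hn).
apply: (proj2 (sat_comp S (xs s0) t)).
move: Hl; rewrite inE => /asbP Hc.
have := Hc _ _ HLS _ Hsat. by rewrite Ee.
Qed.
End Core.
Section Cls.
Variables (G : finType) (c : rel G) (f g : G -> nat).
Hypothesis crefl : forall x, c x x.
Hypothesis ctrans : forall x y z, c x y -> c y z -> c x z.
Definition Dn t := [set s | c s t].
Definition Cl t := [set s | c t s && c s t].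
Hypothesis HD : forall t, \sum_(s in Dn t) f s = \sum_(s in Dn t) g s.

Lemma union_lem n : forall A : {set G}, #|A| <= n ->
  (forall r, r \in A -> Cl r \subset A /\ \sum_(s in Cl r) f s = \sum_(s in Cl r) g s) ->
  \sum_(s in A) f s = \sum_(s in A) g s.
Proof.
elim: n => [|n IH] A HA H.
  move: HA; rewrite leqn0 cards_eq0 => /eqP ->; by rewrite !big_set0.
case: (set_0Vmem A) => [->|[r Hr]]; first by rewrite !big_set0.
have [Hsub Hsum] := H r Hr.
rewrite (big_setID (Cl r)) [RHS](big_setID (Cl r)) /=.
rewrite (setIidPr Hsub) Hsum; congr (_ + _).
apply: IH.
  have : #|A :\: Cl r| < #|A|.
    apply: proper_card; apply/properP; split; first exact: subsetDl.
    exists r => //; by rewrite inE !inE crefl.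
  move=> h; exact: (leq_trans h HA).
move=> r'; rewrite inE => /andP[Hr'C Hr'A].
have [Hsub' Hsum'] := H r' Hr'A; split => //.
apply/subsetP => x Hx; rewrite inE (subsetP Hsub' _ Hx) andbT.
apply/negP => HxC; move: Hr'C; rewrite inE; apply/negP/negPn.
move: Hx HxC; rewrite !inE => /andP[h1 h2] /andP[h3 h4].
by rewrite (ctrans h3 h2) (ctrans h1 h4).
Qed.

Lemma cls_lem n : forall t, #|Dn t| <= n -> \sum_(s in Cl t) f s = \sum_(s in Cl t) g s.
Proof.
elim: n => [|n IH] t Ht.
  by move: Ht; rewrite leqn0 cards_eq0 => /eqP /setP /(_ t); rewrite !inE crefl.
have HCD : Cl t \subset Dn t by apply/subsetP => x; rewrite !inE => /andP[].
have := HD t; rewrite (big_setID (Cl t)) [in X in _ = X](big_setID (Cl t)) /= (setIidPr HCD).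
move=> E; apply/eqP; rewrite -(eqn_add2r (\sum_(i in Dn t :\: Cl t) f i)) E; apply/eqP.
congr (_ + _); symmetry.
apply: (@union_lem #|G|); first exact: max_card.
move=> r; rewrite !inE => /andP[Hr1 Hr2]; split.
- apply/subsetP => x; rewrite !inE => /andP[h1 h2].
  rewrite (ctrans h2 Hr2) andbT; apply/negP => /andP[h3 _].
  by move: Hr1; rewrite (ctrans h3 h2) Hr2.
- apply: IH.
  have : #|Dn r| < #|Dn t|.
    apply: proper_card; apply/properP; split.
      by apply/subsetP => x; rewrite !inE => h; exact: ctrans h Hr2.
    exists t; rewrite !inE ?crefl //.
    apply/negP => h; by move: Hr1; rewrite h Hr2.
  move=> h; by rewrite -ltnS (leq_trans h Ht).
Qed.
End Cls.

Theorem proposition4 (Gamma Sigma : finType) (S : shape_graph Gamma Sigma) (t : Gamma)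
  (T : {set Gamma}) (HT : forall s, s \in T <-> type_equiv S t s)
  (S' : shape_graph Gamma Sigma) (HS : shape_equiv S S') (u : Gamma) (a : Sigma) :
  \sum_(s in T) minarity S u a s = \sum_(s in T) minarity S' u a s.
Proof.
pose c : rel Gamma := fun s r => asb (cont S s r).
have crefl : forall x, c x x by move=> x; apply/asbP.
have ctrans : forall x y z, c x y -> c y z -> c x z.
  move=> x y z /asbP H1 /asbP H2; apply/asbP => N E HL n Hn; apply: H2 HL _ (H1 _ _ HL _ Hn).
have HS' : shape_equiv S' S by move=> N E tau; split => H; apply/(HS N E tau).
have HDeq : forall r, Dset S' r = Dset S r.
  move=> r; apply/setP => s; rewrite !inE; apply/asbP/asbP => H N E HL n Hn.
  - have [HL' Hi] := equiv_fw HS HL. apply/Hi; apply: H HL' _ _; exact/Hi.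
  - have [HL' Hi] := equiv_bw HS HL. apply/Hi; apply: H HL' _ _; exact/Hi.
have HD : forall r, \sum_(s in Dn c r) minarity S u a s = \sum_(s in Dn c r) minarity S' u a s.
  move=> r; apply/eqP; rewrite eqn_leq; apply/andP; split.
  - exact: (core HS r u a).
  - have := core HS' r u a; by rewrite HDeq.
have -> : T = Cl c t.
  apply/setP => s; rewrite !inE; apply/idP/andP.
  - move/HT => H; split; apply/asbP => N E HL n Hn; by apply/(H N E HL n).
  - case=> /asbP H1 /asbP H2; apply/HT => N E HL n; split; [exact: H1|exact: H2].
exact: (cls_lem crefl ctrans HD (leqnn _)).
Qed.
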